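(* Assume the setting described in the context, with $\rho$ atomic and $(\rho,\sim)$ weakly commutative. Fix a deterministic strategy $\Lambda$, an initial distribution $\omega^{\mathrm{init}}$, a permutation $\pi$ of $F$ and an integer $t$. Then there exist a set $\mathrm{Bad}_\pi(t)$ of $\pi$-stable walks and a swapping mapping $\Phi:\mathrm{Bad}(t)\to\mathrm{Bad}_\pi(t)$ that is a bijection.
   Context: Setting: $\Omega$ is a finite set and $F$ a finite set of flaws, each a nonempty subset of $\Omega$; $F_\sigma=\{f:\sigma\in f\}$. For $\sigma\in\Omega$ and $f\in F_\sigma$ there is a probability distribution $\rho(\cdot\mid f,\sigma)$ with support $A(f,\sigma)$. We write $\sigma\xrightarrow{f}\sigma'$ when $f\in F_\sigma$ and $\sigma'\in A(f,\sigma)$. A walk is a sequence $\sigma_1\xrightarrow{w_1}\sigma_2\cdots\xrightarrow{w_t}\sigma_{t+1}$ of such steps; its word is $w_1\ldots w_t$ and its length is $t$. $\sim$ is a symmetric relation on $F$ (loops allowed), with $\Gamma(f)=\{g:f\sim g\}$, $\Gamma^+(f)=\Gamma(f)\cup\{f\}$ and $\Gamma^+(S)=\bigcup_{f\in S}\Gamma^+(f)$. It is assumed that for every step $\sigma\xrightarrow{f}\sigma'$, $F_{\sigma'}\subseteq(F_\sigma\setminus\{f\})\cup\Gamma(f)$. Independent sets are sets $S$ with $f\not\sim g$ for distinct $f,g\in S$, and $\mathrm{Ind}(F)$ is the family of independent sets. Write $f\cong g$ if $f\sim g$ or $f=g$. $\rho$ is atomic if for every $f$ and $\sigma'$ there is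 at most one $\sigma$ with $\sigma\xrightarrow{f}\sigma'$. $(\rho,\sim)$ is weakly commutative if there is an injective map SWAP sending each walk $\sigma_1\xrightarrow{f}\sigma_2\xrightarrow{g}\sigma_3$ with $f\not\sim g$ to a walk $\sigma_1\xrightarrow{g}\sigma_2'\xrightarrow{f}\sigma_3$; fix such a map. A valid swap applied to a walk replaces a consecutive subwalk $\sigma_1\xrightarrow{f}\sigma_2\xrightarrow{g}\sigma_3$ with $f\not\cong g$ by its SWAP image. A swapping mapping is a map on a set of walks that sends each walk to the result of applying some sequence of valid swaps to it. A deterministic strategy assigns to each walk $\sigma_1\xrightarrow{w_1}\cdots\sigma_i$ whose last state is flawed a flaw in $F_{\sigma_i}$. A walk follows the strategy if each $w_i$ is the flaw assigned to its prefix ending at $\sigma_i$. $\mathrm{Bad}(t)$ is the set of walks of length $t$ that start at a state $\sigma_1$ with $\omega^{\mathrm{init}}(\sigma_1)>0$ and follow $\Lambda$; equivalently, the walks of length $t$ produced with positive probability by Algorithm 1 (sample $\sigma$ from $\omega^{\mathrm{init}}$; while $F_\sigma\neq\varnothing$, choose $f\in F_\sigma$ by $\Lambda$ and move to $\sigma'$ sampled from $\rho(\cdot\mid f,\sigma)$). Stable and $\pi$-stable words: a sequence of sets $(I_1,\ldots,I_s)$ with $s\ge1$ is stable if each $I_r\in\mathrm{Ind}(F)$ and $I_{r+1}\subseteq\Gamma^+(I_r)$. A word $W$ is stable if $W=W_1\ldots W_s$ with nonempty words $W_r$ of distinct flaws such that the sequence of their flaw sets is stable. It is $\pi$-stable if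 in addition each $W_r$ is strictly increasing in the order $\preceq_\pi$ induced by the permutation $\pi$. A walk is ($\pi$-)stable if its word is. *)

(* Defs.v *)
From HB Require Import structures.
From mathcomp Require Import all_boot all_order all_algebra.
Set Implicit Arguments. Unset Strict Implicit. Unset Printing Implicit Defensive.
Import Order.TTheory GRing.Theory Num.Theory.
Local Open Scope ring_scope.

Section Flaws.
Variables (Omega F : finType).
Variable fl : F -> {set Omega}.
(* sim : the symmetric relation ~ on flaws (loops allowed) *)
Variable sim : rel F.

Definition flaws_at (s : Omega) : {set F} := [set f | s \in fl f].

Definition is_distr (R : numDomainType) (p : Omega -> R) : Prop :=
  (forall x, 0 <= p x) /\ \sum_x p x = 1.

(* rho f s s' = rho(s' | f, s);  step: s --f--> s' *)
Definition step (R : numDomainType) (rho : F -> Omega -> Omega -> R)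
    (s : Omega) (f : F) (s' : Omega) : bool :=
  (s \in fl f) && (0 < rho f s s').

(* A walk sigma_1 --w_1--> sigma_2 ... --w_t--> sigma_{t+1} is represented by
   (sigma_1, [:: (w_1, sigma_2); ...; (w_t, sigma_{t+1})]). *)
Definition walk := (Omega * seq (F * Omega))%type.

Definition wlen (w : walk) : nat := size w.2.
Definition word (w : walk) : seq F := map fst w.2.
Definition wlast (w : walk) : Omega := last w.1 (map snd w.2).

Fixpoint steps_ok (R : numDomainType) (rho : F -> Omega -> Omega -> R)
    (s : Omega) (l : seq (F * Omega)) : bool :=
  if l is (f, s') :: l' then step rho s f s' && steps_ok rho s' l' else true.

Definition is_walk (R : numDomainType) (rho : F -> Omega -> Omega -> R)
    (w : walk) : bool := steps_ok rho w.1 w.2.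

Definition flaw_transition_ok (R : numDomainType)
    (rho : F -> Omega -> Omega -> R) : Prop :=
  forall s f s', step rho s f s' ->
    forall g, s' \in fl g -> ((s \in fl g) && (g != f)) || sim f g.

Definition atomic (R : numDomainType) (rho : F -> Omega -> Omega -> R) : Prop :=
  forall f s1 s2 s', step rho s1 f s' -> step rho s2 f s' -> s1 = s2.

(* The fixed map SWAP of weak commutativity: the walk
   s1 --f--> s2 --g--> s3 (with f not~ g) is sent to
   s1 --g--> sw s1 f s2 g s3 --f--> s3; SWAP is injective. *)
Definition swap_map_ok (R : numDomainType) (rho : F -> Omega -> Omega -> R)
    (sw : Omega -> F -> Omega -> F -> Omega -> Omega) : Prop :=
  forall s1 f s2 g s3, step rho s1 f s2 -> step rho s2 g s3 -> ~~ sim f g ->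
    step rho s1 g (sw s1 f s2 g s3) && step rho (sw s1 f s2 g s3) f s3.

Definition swap_map_inj (R : numDomainType) (rho : F -> Omega -> Omega -> R)
    (sw : Omega -> F -> Omega -> F -> Omega -> Omega) : Prop :=
  forall s1 f s2 s2' g s3,
    step rho s1 f s2 -> step rho s2 g s3 ->
    step rho s1 f s2' -> step rho s2' g s3 -> ~~ sim f g ->
    sw s1 f s2 g s3 = sw s1 f s2' g s3 -> s2 = s2'.

Definition swap_step (R : numDomainType) (rho : F -> Omega -> Omega -> R)
    (sw : Omega -> F -> Omega -> F -> Omega -> Omega) (w w' : walk) : Prop :=
  exists pre f s2 g s3 post,
    let s1 := last w.1 (map snd pre) in
    [/\ w.2 = pre ++ (f, s2) :: (g, s3) :: post,
        ~~ ((f == g) || sim f g),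
        step rho s1 f s2, step rho s2 g s3 &
        w' = (w.1, pre ++ (g, sw s1 f s2 g s3) :: (f, s3) :: post)].

Inductive swaps (R : numDomainType) (rho : F -> Omega -> Omega -> R)
    (sw : Omega -> F -> Omega -> F -> Omega -> Omega) : walk -> walk -> Prop :=
| swaps_refl w : swaps rho sw w w
| swaps_cons w1 w2 w3 :
    swap_step rho sw w1 w2 -> swaps rho sw w2 w3 -> swaps rho sw w1 w3.

Definition is_strategy (R : numDomainType) (rho : F -> Omega -> Omega -> R)
    (Lam : walk -> option F) : Prop :=
  forall w, is_walk rho w -> flaws_at (wlast w) != set0 ->
    exists2 f, Lam w = Some f & f \in flaws_at (wlast w).

Definition follows (Lam : walk -> option F) (w : walk) : Prop :=
  forall i, (i < size w.2)%N -> Lam (w.1, take i w.2) = omap fst (onth w.2 i).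

Definition Bad (R : numDomainType) (rho : F -> Omega -> Omega -> R)
    (omega : Omega -> R) (Lam : walk -> option F) (t : nat) (w : walk) : Prop :=
  [/\ is_walk rho w, wlen w = t, 0 < omega w.1 & follows Lam w].

Definition indep (S : {set F}) : bool :=
  [forall f in S, forall g in S, (f != g) ==> ~~ sim f g].

Definition GammaP (S : {set F}) : {set F} :=
  [set g | [exists f in S, (g == f) || sim f g]].

Definition stable_seq (Is : seq {set F}) : bool :=
  (
  [&& (0 < size Is)%N, all indep Is & sorted (fun I J : {set F} => J \subset GammaP I) Is]).

Definition stable_word (W : seq F) : Prop :=
  exists Ws : seq (seq F),
    [/\ W = flatten Ws, all (fun Wr => Wr != [::]) Ws, all uniq Ws &
        stable_seq (map (fun Wr => [set f in Wr]) Ws)].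

(* pi : F -> 'I_#|F| a bijection (the permutation / ranking of F);
   f \prec_pi g iff pi f < pi g *)
Definition pi_stable_word (pi : F -> 'I_#|F|) (W : seq F) : Prop :=
  exists Ws : seq (seq F),
    [/\ W = flatten Ws, all (fun Wr => Wr != [::]) Ws, all uniq Ws,
        stable_seq (map (fun Wr => [set f in Wr]) Ws) &
        all (sorted (fun f g => (pi f < pi g)%N)) Ws].

End Flaws.

(* Main.v *)
Require Import Defs.
From HB Require Import structures.
From mathcomp Require Import all_boot all_order all_algebra.
From Stdlib Require Import ClassicalEpsilon.
Set Implicit Arguments. Unset Strict Implicit. Unset Printing Implicit Defensive.
Import Order.TTheory GRing.Theory Num.Theory.
Section Words.
Variables (F : finType) (sim : rel F).
Hypothesis simS : symmetric sim.

Definition D (a b : F) : bool := (a == b) || sim a b.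

Lemma DC a b : D a b = D b a.
Proof. by rewrite /D eq_sym simS. Qed.

Definition tstep (W W' : seq F) : Prop :=
  exists u b c v, [/\ W = u ++ b :: c :: v, W' = u ++ c :: b :: v & ~~ D b c].

Inductive tstar : seq F -> seq F -> Prop :=
| ts_refl W : tstar W W
| ts_step W1 W2 W3 : tstep W1 W2 -> tstar W2 W3 -> tstar W1 W3.

Lemma tstar_trans W1 W2 W3 : tstar W1 W2 -> tstar W2 W3 -> tstar W1 W3.
Proof. by elim=> // A B C s _ IH /IH; apply: ts_step. Qed.

Lemma tstep_sym W W' : tstep W W' -> tstep W' W.
Proof. by case=> [u [b [c [v [-> -> H]]]]]; exists u, c, b, v; rewrite DC. Qed.

Lemma tstar_sym W W' : tstar W W' -> tstar W' W.
Proof.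
elim=> [W0|A B C s _ IH]; first exact: ts_refl.
apply: tstar_trans IH _; apply: ts_step (tstep_sym s) (ts_refl _).
Qed.

Lemma tstep_ctx u v W W' : tstep W W' -> tstep (u ++ W ++ v) (u ++ W' ++ v).
Proof.
case=> [x [b [c [y [-> -> H]]]]]; exists (u ++ x), b, c, (y ++ v).
by rewrite -!catA.
Qed.

Lemma tstar_ctx u v W W' : tstar W W' -> tstar (u ++ W ++ v) (u ++ W' ++ v).
Proof.
elim=> [W0|A B C s _ IH]; first exact: ts_refl.
exact: ts_step (tstep_ctx u v s) IH.
Qed.

Lemma tstar_catl u W W' : tstar W W' -> tstar (u ++ W) (u ++ W').
Proof. by move=> /(tstar_ctx u [::]); rewrite !cats0. Qed.

Lemma tstar_catr v W W' : tstar W W' -> tstar (W ++ v) (W' ++ v).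
Proof. exact: (tstar_ctx [::] v). Qed.

Lemma mv_left (a : F) S P Q : all (fun x => ~~ D a x) S ->
  tstar (P ++ S ++ a :: Q) (P ++ a :: S ++ Q).
Proof.
elim: S P => [|x S IH] P /=; first by move=> _; exact: ts_refl.
case/andP=> Hx HS.
apply: tstar_trans (_ : tstar _ (P ++ x :: a :: S ++ Q)) _.
  by have := IH (rcons P x) HS; rewrite -!cats1 -!catA.
apply: ts_step (ts_refl _); exists P, x, a, (S ++ Q); split => //.
by rewrite DC.
Qed.

Lemma rem_cat_in (a : F) u X : a \in u -> rem a (u ++ X) = rem a u ++ X.
Proof.
elim: u => //= y u IH; rewrite in_cons; case: (y =P a) => [->|ne] //=.
move=> H; rewrite IH //; case/orP: H => // /eqP E; by case: ne.
Qed.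

Lemma rem_cat_notin (a : F) u X : a \notin u -> rem a (u ++ X) = u ++ rem a X.
Proof.
elim: u => //= y u IH; rewrite in_cons negb_or eq_sym; case/andP=> H1 H2.
by rewrite (negbTE H1) IH.
Qed.

Lemma tstep_rem (a : F) W W' : tstep W W' -> tstar (rem a W) (rem a W').
Proof.
case=> [u [b [c [v [-> -> H]]]]].
case: (boolP (a \in u)) => au.
  rewrite !rem_cat_in //; apply: ts_step (ts_refl _).
  by exists (rem a u), b, c, v.
rewrite !rem_cat_notin //=.
have bc : b != c by move: H; rewrite /D negb_or => /andP[].
case: (b =P a) => [eba|nba]; case: (c =P a) => [eca|nca].
- by move: bc; rewrite eba eca eqxx.
- move/eqP/negbTE: nca => nca; subst b; rewrite /=; rewrite ?eqxx ?nca; exact: ts_refl.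
- move/eqP/negbTE: nba => nba; subst c; rewrite /=; rewrite ?eqxx ?nba; exact: ts_refl.
apply: ts_step (ts_refl _); exists u, b, c, (rem a v); split => //.
Qed.

Lemma tstar_rem (a : F) W W' : tstar W W' -> tstar (rem a W) (rem a W').
Proof.
elim=> [W0|A B C s _ IH]; first exact: ts_refl.
exact: tstar_trans (tstep_rem a s) IH.
Qed.

Lemma tstar_cancel (f : F) W W' : tstar (f :: W) (f :: W') -> tstar W W'.
Proof. by move/(tstar_rem f); rewrite /= eqxx. Qed.


Lemma perm_tstar B B' : uniq B -> {in B &, forall x y, x != y -> ~~ D x y} ->
  perm_eq B B' -> tstar B B'.
Proof.
elim: B' B => [|y B' IH] B HU HP Hperm.
  by move: (perm_size Hperm) => /size0nil ->; exact: ts_refl.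
have yB : y \in B by rewrite (perm_mem Hperm) mem_head.
move: HU HP Hperm; case/splitPr: yB => B1 B2 HU HP Hperm.
have pB : perm_eq (B1 ++ y :: B2) (y :: B1 ++ B2) by apply/permPl; exact: (perm_catCA B1 [:: y] B2).
have HU' : uniq (y :: B1 ++ B2) by rewrite -(perm_uniq pB).
apply: tstar_trans (_ : tstar _ (y :: B1 ++ B2)) _.
  have := @mv_left y B1 [::] B2; rewrite !cat0s; apply.
  apply/allP => x xB1; apply: HP.
  - by rewrite mem_cat mem_head orbT.
  - by rewrite mem_cat xB1.
  - by apply/eqP => E; move: HU'; rewrite /= mem_cat E xB1.
apply: (tstar_catl [:: y]); apply: IH.
- by case/andP: HU'.
- move=> x z xI zI; apply: HP; rewrite mem_cat in_cons; [move: xI|move: zI];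
  by rewrite mem_cat; case/orP=> ->; rewrite ?orbT.
- by rewrite -(perm_cons y); apply: perm_trans Hperm; rewrite perm_sym.
Qed.


Definition good (B : seq F) : bool :=
  [&& B != [::], uniq B & indep sim [set f in B]].

Definition brel (B C : seq F) : bool :=
  [set f in B] \subset GammaP sim [set f in C].

Fixpoint place (a : F) (B : seq F) (Rs : seq (seq F)) : seq (seq F) :=
  match Rs with
  | [::] => [:: rcons B a]
  | C :: Rs' => if has (D a) C then rcons B a :: C :: Rs' else B :: place a C Rs'
  end.

Definition ins (a : F) (Rs : seq (seq F)) : seq (seq F) :=
  match Rs with
  | [::] => [:: [:: a]]
  | B :: Rs' => if has (D a) B then [:: a] :: Rs else place a B Rs'
  end.

Lemma good_pair B : good B -> {in B &, forall x y, x != y -> ~~ D x y}.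
Proof.
case/and3P=> _ _ /forallP HI x y xB yB nxy.
have := HI x; rewrite inE xB /= => /forallP /(_ y); rewrite inE yB nxy /=.
by rewrite /D (negbTE nxy).
Qed.

Lemma brel_refl B : brel B B.
Proof.
apply/subsetP => x; rewrite /GammaP !inE => xB; apply/existsP; exists x.
by rewrite inE xB eqxx.
Qed.

Lemma brel_rcons X B a : brel X B -> brel X (rcons B a).
Proof.
move=> /subsetP H; apply/subsetP => x /H; rewrite /GammaP !inE => /existsP [f].
case/andP; rewrite inE => fB Hf; apply/existsP; exists f.
by rewrite inE mem_rcons in_cons fB orbT.
Qed.

Lemma brel_dep B C a : brel B C -> has (D a) C -> brel (rcons B a) C.
Proof.
move=> /subsetP H /hasP [c cC Hc]; apply/subsetP => x.
rewrite inE mem_rcons in_cons => /orP [/eqP ->|xB].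
  rewrite /GammaP inE; apply/existsP; exists c; rewrite inE cC /=.
  by move: Hc; rewrite /D; case/orP => [->|]; rewrite // simS => ->; rewrite orbT.
by apply: H; rewrite inE.
Qed.

Lemma good_rcons B a : good B -> ~~ has (D a) B -> good (rcons B a).
Proof.
move=> gB nh; have HP := good_pair gB.
case/and3P: gB => _ uB _.
have aB : a \notin B.
  by apply/negP => aB; move/hasPn: nh => /(_ a aB); rewrite /D eqxx.
apply/and3P; split.
- by case: B {uB nh HP aB}.
- by rewrite rcons_uniq aB.
apply/forallP => x; apply/implyP; rewrite inE mem_rcons in_cons => xI.
apply/forallP => y; apply/implyP; rewrite inE mem_rcons in_cons => yI.
have nD : forall z, z \in B -> ~~ sim a z.
  by move=> z zB; move/hasPn: nh => /(_ z zB); rewrite /D negb_or => /andP[].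
case/orP: xI => [/eqP ->|xB]; case/orP: yI => [/eqP ->|yB].
- by rewrite eqxx.
- by apply/implyP => _; exact: nD.
- by apply/implyP => _; rewrite simS; exact: nD.
apply/implyP => nxy.
by have := HP x y xB yB nxy; rewrite /D negb_or => /andP[].
Qed.


Lemma place_ok a Rs B : good B -> ~~ has (D a) B -> all good Rs -> path brel B Rs ->
  all good (place a B Rs) /\ (forall X, brel X B -> path brel X (place a B Rs)).
Proof.
elim: Rs B => [|C Rs IH] B gB nh /= gRs pth.
  by rewrite good_rcons //; split => // X /brel_rcons ->.
case/andP: gRs => gC gRs; case/andP: pth => bBC pC.
case: ifP => hC /=.
  rewrite good_rcons //= gC gRs; split => // X bXB.
  by rewrite brel_rcons //= brel_dep.
have [IH1 IH2] := IH C gC (negbT hC) gRs pC.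
by rewrite gB IH1; split => // X ->; rewrite IH2.
Qed.

Lemma good1 a : good [:: a].
Proof.
apply/and3P; split => //; apply/forallP => x; apply/implyP; rewrite inE mem_seq1 => /eqP->.
by apply/forallP => y; apply/implyP; rewrite inE mem_seq1 => /eqP->; rewrite eqxx.
Qed.

Lemma ins_ok a Rs : all good Rs -> sorted brel Rs ->
  all good (ins a Rs) /\ sorted brel (ins a Rs).
Proof.
case: Rs => [|B Rs] /=; first by rewrite good1.
case/andP=> gB gRs pth; case: ifP => hB /=.
  rewrite good1 gB gRs pth andbT; split => //.
  have b0 : brel [::] B by apply/subsetP => x; rewrite inE.
  by have := brel_dep b0 hB; rewrite andbT.
have [H1 H2] := place_ok gB (negbT hB) gRs pth.
by split => //; apply: path_sorted (H2 B (brel_refl B)).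
Qed.

Lemma place_tstar a Rs B S : all (fun x => ~~ D a x) B -> all (fun x => ~~ D a x) S ->
  tstar (flatten (rev Rs) ++ B ++ S ++ [:: a]) (flatten (rev (place a B Rs)) ++ S).
Proof.
elim: Rs B S => [|C Rs IH] B S hB hS /=.
  rewrite cats0 -cats1 -catA /=.
  by have := @mv_left a S B [::]; rewrite cats0 /=; apply.
rewrite rev_cons flatten_rcons; case: ifP => hC.
  rewrite !rev_cons !flatten_rcons -cats1 -!catA.
  by apply: tstar_catl; apply: tstar_catl; have := @mv_left a S B [::]; rewrite cats0; apply.
rewrite rev_cons flatten_rcons -!catA.
have := IH C (B ++ S); rewrite -!catA; apply.
  by rewrite all_predC hC.
by rewrite all_cat hB hS.
Qed.

Lemma ins_tstar a Rs : tstar (flatten (rev Rs) ++ [:: a]) (flatten (rev (ins a Rs))).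
Proof.
case: Rs => [|B Rs] /=; first exact: ts_refl.
case: ifP => hB.
  by rewrite !rev_cons !flatten_rcons -catA; exact: ts_refl.
have := @place_tstar a Rs B [::]; rewrite rev_cons flatten_rcons !cats0 -catA; apply => //.
by rewrite all_predC hB.
Qed.


Lemma ins_nil a Rs : ins a Rs != [::].
Proof.
case: Rs => //= B Rs; case: ifP => // _.
by case: Rs => //= C Rs; case: ifP.
Qed.

Lemma nf_exists (W : seq F) : exists Rs, [/\ tstar W (flatten (rev Rs)),
  all good Rs, sorted brel Rs & (W != [::] -> Rs != [::])].
Proof.
elim/last_ind: W => [|W a [Rs [H1 H2 H3 _]]].
  by exists [::]; split => //; exact: ts_refl.
exists (ins a Rs); have [G1 G2] := ins_ok a H2 H3; split => //.
  rewrite -cats1; apply: tstar_trans (tstar_catr [:: a] H1) (ins_tstar a Rs).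
by move=> _; exact: ins_nil.
Qed.

Variable pi : F -> 'I_#|F|.
Hypothesis piI : injective pi.

Definition lepi (f g : F) : bool := (pi f <= pi g)%N.

Lemma flatten_sort L : all good L ->
  tstar (flatten L) (flatten (map (sort lepi) L)).
Proof.
elim: L => [|B L IH] /=; first by move=> _; exact: ts_refl.
case/andP=> gB gL; apply: tstar_trans (tstar_catr _ _) (tstar_catl _ (IH gL)).
apply: perm_tstar; first by case/and3P: gB.
  exact: good_pair.
by rewrite perm_sym perm_sort.
Qed.

Lemma lt_sorted s : uniq s -> sorted lepi s -> sorted (fun f g => (pi f < pi g)%N) s.
Proof.
move=> u so.
have inj : injective (fun f => nat_of_ord (pi f)) by move=> x y /val_inj /piI.
have : sorted ltn (map (fun f => nat_of_ord (pi f)) s).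
  by rewrite ltn_sorted_uniq_leq map_inj_uniq // u sorted_map.
by rewrite sorted_map.
Qed.

Lemma pi_stable_exists W : W != [::] ->
  exists W', tstar W W' /\ pi_stable_word sim pi W'.
Proof.
move=> nW; have [Rs [H1 H2 H3 H4]] := nf_exists W.
have nRs := H4 nW.
exists (flatten (map (sort lepi) (rev Rs))); split.
  apply: tstar_trans H1 (flatten_sort _); by rewrite all_rev.
exists (map (sort lepi) (rev Rs)); split => //.
- rewrite all_map; apply/allP => B; rewrite mem_rev => /(allP H2) /and3P [nB _ _] /=.
  by rewrite -size_eq0 size_sort size_eq0.
- rewrite all_map; apply/allP => B; rewrite mem_rev => /(allP H2) /and3P [_ uB _] /=.
  by rewrite sort_uniq.
- have -> : map (fun Wr => [set f in Wr]) (map (sort lepi) (rev Rs)) =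
            map (fun Wr => [set f in Wr]) (rev Rs).
    by rewrite -map_comp; apply: eq_map => B; apply/setP => x; rewrite /= !inE mem_sort.
  apply/and3P; split.
  + by rewrite size_map size_rev lt0n size_eq0.
  + rewrite all_map; apply/allP => B; rewrite mem_rev => /(allP H2) /and3P [_ _ iB] //.
  + by rewrite map_rev rev_sorted sorted_map.
- rewrite all_map; apply/allP => B; rewrite mem_rev => /(allP H2) /and3P [_ uB _] /=.
  apply: lt_sorted; first by rewrite sort_uniq.
  by apply: sort_sorted => x y; exact: leq_total.
Qed.


Lemma tstar_size W W' : tstar W W' -> size W = size W'.
Proof.
elim=> // A B C [u [b [c [v [-> -> _]]]]] _ <-.
by rewrite !size_cat.
Qed.

End Words.
Section Walks.
Variables (R : realFieldType) (Omega F : finType) (fl : F -> {set Omega}) (sim : rel F)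
  (rho : F -> Omega -> Omega -> R) (sw : Omega -> F -> Omega -> F -> Omega -> Omega).
Hypothesis simS : symmetric sim.
Hypothesis swok : swap_map_ok fl sim rho sw.
Hypothesis atom : atomic fl rho.

Lemma steps_ok_cat s l1 l2 : steps_ok fl rho s (l1 ++ l2) =
  steps_ok fl rho s l1 && steps_ok fl rho (last s (map snd l1)) l2.
Proof.
elim: l1 s => [|[f x] l1 IH] s //=.
by rewrite IH andbA.
Qed.

Lemma split_fst (l : seq (F * Omega)) u v : map fst l = u ++ v ->
  exists l1 l2, [/\ l = l1 ++ l2, map fst l1 = u & map fst l2 = v].
Proof.
elim: u l => [|a u IH] l /=; first by move=> <-; exists [::], l.
case: l => [|[f x] l] //= [-> /IH [l1 [l2 [-> <- <-]]]].
by exists ((a, x) :: l1), l2.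
Qed.

Lemma swap_step_props w w' : is_walk fl rho w -> swap_step fl sim rho sw w w' ->
  [/\ is_walk fl rho w', w'.1 = w.1, wlast w' = wlast w,
      wlen w' = wlen w & tstep sim (word w) (word w')].
Proof.
move=> Hw [pre [f [s2 [g [s3 [post [E nD st1 st2 ->]]]]]]].
move: Hw; rewrite /is_walk E steps_ok_cat => /andP [Hpre /=].
case/and3P=> _ _ Hpost.
have nsim : ~~ sim f g by move: nD; rewrite negb_or => /andP[].
have /andP [sa sb] := swok st1 st2 nsim.
rewrite /is_walk /wlast /wlen /word /= E steps_ok_cat Hpre /= sa sb Hpost; split => //.
- by rewrite !map_cat !last_cat.
- by rewrite !size_cat.
by exists (map fst pre), f, g, (map fst post); rewrite !map_cat.
Qed.


Lemma swaps_props w w' : is_walk fl rho w -> swaps fl sim rho sw w w' ->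
  [/\ is_walk fl rho w', w'.1 = w.1, wlast w' = wlast w,
      wlen w' = wlen w & tstar sim (word w) (word w')].
Proof.
move=> Hw H; elim: H Hw => [w0|w1 w2 w3 s _ IH] Hw; first by split => //; exact: ts_refl.
have [H1 H2 H3 H4 H5] := swap_step_props Hw s.
have [G1 G2 G3 G4 G5] := IH H1.
split => //; try congruence.
exact: ts_step H5 G5.
Qed.

Lemma tstep_walk w W' : is_walk fl rho w -> tstep sim (word w) W' ->
  exists w', swap_step fl sim rho sw w w' /\ word w' = W'.
Proof.
move=> Hw [u [b [c [v [E -> nD]]]]].
have [l1 [l2 [E2 E3 E4]]] := split_fst E.
case: l2 E2 E4 => [|[b' s2] [|[c' s3] post]] //= E2 [Eb Ec Ev]; subst b' c'.
move: Hw; rewrite /is_walk E2 steps_ok_cat => /andP [_ /= /and3P [st1 st2 _]].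
exists (w.1, l1 ++ (c, sw (last w.1 (map snd l1)) b s2 c s3) :: (b, s3) :: post); split.
  by exists l1, b, s2, c, s3, post; split.
by rewrite /word /= map_cat E3 -Ev.
Qed.

Lemma lift_walk W W' : tstar sim W W' -> forall w, is_walk fl rho w -> word w = W ->
  exists w', swaps fl sim rho sw w w' /\ word w' = W'.
Proof.
elim=> [W0|W1 W2 W3 s _ IH] w Hw Ew.
  by exists w; split => //; exact: swaps_refl.
rewrite -Ew in s; have [w2 [s2 E2]] := tstep_walk Hw s.
have [H1 _ _ _ _] := swap_step_props Hw s2.
have [w3 [s3 E3]] := IH w2 H1 E2.
by exists w3; split => //; exact: swaps_cons s2 s3.
Qed.

Lemma back_uniq u v : is_walk fl rho u -> is_walk fl rho v -> word u = word v ->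
  wlast u = wlast v -> u = v.
Proof.
case: u v => [s l] [r l'] /=; rewrite /is_walk /word /wlast /=.
elim: l s r l' => [|[f x] l IH] s r [|[g y] l'] //=.
  by move=> _ _ _ ->.
case/andP=> st1 H1 /andP [st2 H2] [ef E] EL; subst g.
have [Ex El] : x = y /\ l = l'.
  by have := IH x y l' H1 H2 E EL; case.
subst y l'; by rewrite (atom st1 st2).
Qed.


Lemma start_inv u v : is_walk fl rho u -> is_walk fl rho v -> wlast u = wlast v ->
  tstar sim (word u) (word v) -> u.1 = v.1.
Proof.
move=> Hu Hv El Et.
have [w' [s E]] := lift_walk Et Hu erefl.
have [H1 H2 H3 _ _] := swaps_props Hu s.
have := back_uniq H1 Hv E (etrans H3 El).
by move=> Ew; rewrite -Ew H2.
Qed.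

Lemma inj_main l1 : forall l2 s (Lam : walk Omega F -> option F),
  steps_ok fl rho s l1 -> steps_ok fl rho s l2 ->
  last s (map snd l1) = last s (map snd l2) ->
  tstar sim (map fst l1) (map fst l2) ->
  follows Lam (s, l1) -> follows Lam (s, l2) -> l1 = l2.
Proof.
elim: l1 => [|[f x] l1 IH] [|[g y] l2] s Lam //=.
- by move=> _ _ _ /tstar_size.
- by move=> _ _ _ /tstar_size.
case/andP=> st1 H1 /andP [st2 H2] EL Et F1 F2.
have ef : f = g.
  have := F1 0 erefl; have := F2 0 erefl; rewrite /= => -> [].
  by move=> ->.
subst g.
have Et' := tstar_cancel Et.
have exy : x = y.
  by have := @start_inv (x, l1) (y, l2) H1 H2 EL Et'.
subst y; congr (_ :: _).
apply: (IH l2 x (fun w => Lam (s, (f, x) :: w.2))) => //.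
- by move=> i Hi; have := F1 i.+1 Hi.
- by move=> i Hi; have := F2 i.+1 Hi.
Qed.

End Walks.
Unset Implicit Arguments.
Local Open Scope ring_scope.
Theorem theorem4 (R : realFieldType) (Omega F : finType)
  (fl : F -> {set Omega}) (sim : rel F)
  (rho : F -> Omega -> Omega -> R)
  (sw : Omega -> F -> Omega -> F -> Omega -> Omega)
  (Lam : walk Omega F -> option F) (omega : Omega -> R)
  (pi : F -> 'I_#|F|) (t : nat) :
  injective fl ->
  (forall f, fl f != set0) ->
  (forall f s, s \in fl f -> is_distr (rho f s)) ->
  symmetric sim ->
  flaw_transition_ok fl sim rho ->
  atomic fl rho ->
  swap_map_ok fl sim rho sw ->
  swap_map_inj fl sim rho sw ->
  is_strategy fl rho Lam ->
  is_distr omega ->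
  bijective pi ->
  (0 < t)%N ->
  exists (BadPi : walk Omega F -> Prop) (Phi : walk Omega F -> walk Omega F),
    [/\ (forall w, BadPi w -> is_walk fl rho w /\ pi_stable_word sim pi (word w)),
        (forall w, Bad fl rho omega Lam t w -> swaps fl sim rho sw w (Phi w)),
        (forall w, Bad fl rho omega Lam t w -> BadPi (Phi w)),
        (forall w1 w2, Bad fl rho omega Lam t w1 -> Bad fl rho omega Lam t w2 ->
            Phi w1 = Phi w2 -> w1 = w2) &
        (forall w', BadPi w' -> exists2 w, Bad fl rho omega Lam t w & Phi w = w')].
Proof.
move=> _ _ _ simS _ atom swok _ _ _ /bij_inj piI tpos.
pose P w w' := swaps fl sim rho sw w w' /\ is_walk fl rho w' /\ pi_stable_word sim pi (word w').
pose Phi w := epsilon (inhabits w) (P w).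
have PhiP : forall w, Bad fl rho omega Lam t w -> P w (Phi w).
  move=> w [Hw Hl _ _]; apply: epsilon_spec.
  have nW : word w != [::].
    by rewrite -size_eq0 /word size_map; move: Hl; rewrite /wlen => ->; rewrite -lt0n.
  have [W' [H1 H2]] := pi_stable_exists simS piI nW.
  have [w' [s E]] := lift_walk swok H1 Hw erefl.
  have [G1 _ _ _ _] := swaps_props swok Hw s.
  by exists w'; split => //; split => //; rewrite E.
exists (fun w' => exists2 w, Bad fl rho omega Lam t w & Phi w = w'), Phi; split.
- by move=> w [w0 /PhiP [_ [H1 H2]] <-].
- by move=> w /PhiP [].
- by move=> w Bw; exists w.
- move=> [s1 l1] [s2 l2] B1 B2 E.
  have [S1 _] := PhiP _ B1; have [S2 _] := PhiP _ B2.
  case: B1 => [Hw1 _ _ F1]; case: B2 => [Hw2 _ _ F2].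
  have [_ G2 G3 _ G5] := swaps_props swok Hw1 S1.
  have [_ K2 K3 _ K5] := swaps_props swok Hw2 S2.
  rewrite E in G2 G3 G5; rewrite G2 /= in K2; subst s2.
  have Et : tstar sim (word (s1, l1)) (word (s1, l2)).
    by apply: tstar_trans G5 _; apply: tstar_sym.
  congr (_, _); apply: (inj_main swok atom Hw1 Hw2 _ Et F1 F2).
  by move: G3 K3; rewrite /wlast /= => <- <-.
- by move=> w' [w Bw <-]; exists w.
Qed.
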